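(* Let $(\lambda_k)_{k\ge1}$, $(\mu_k)_{k\ge1}$ be nonzero real numbers with $|\lambda_1|>|\mu_1|>|\lambda_2|>|\mu_2|>\dots>0$ and $\lambda_k\to0$. Then $$\lim_{N\to\infty}\frac{1}{\lambda_N^2}\prod_{k=1}^\infty\frac{\lambda_N^2+\mu_k^2}{\lambda_N^2+\lambda_k^2}=\infty$$ if and only if $$\sum_{k\ge1}\Big(\frac{\mu_k^2}{\lambda_{k+1}^2}-1\Big)=\infty.$$ *)

(* Defs.v *)
From HB Require Import structures.
From mathcomp Require Import all_boot all_order all_algebra.
From mathcomp Require Import all_classical all_reals all_analysis.
Set Implicit Arguments. Unset Strict Implicit. Unset Printing Implicit Defensive.
Import Order.TTheory GRing.Theory Num.Theory.
Import numFieldNormedType.Exports.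
Local Open Scope ring_scope.

Definition infprod (R : realType) (F : nat -> R) : R :=
  limn (fun n : nat => (\prod_(k < n) F k : R)).

(* Main.v *)
Require Import Defs.
From HB Require Import structures.
From mathcomp Require Import all_boot all_order all_algebra.
From mathcomp Require Import all_classical all_reals all_analysis.
From mathcomp Require Import ring lra.
Import Order.TTheory GRing.Theory Num.Theory.
Import numFieldNormedType.Exports.
Local Open Scope classical_set_scope.
Local Open Scope ring_scope.

Section Aux.
Variable R : realType.
Variables L M : nat -> R.
Hypothesis hM0 : forall k, 0 < M k.
Hypothesis hLM : forall k, M k < L k.
Hypothesis hML : forall k, L k.+1 < M k.
Hypothesis hL : L @ \oo --> 0.

Lemma Lpos k : 0 < L k.
Proof. exact: lt_trans (hM0 k) (hLM k). Qed.

Lemma Lle0 n : L n <= L 0.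
Proof.
elim: n => [//|n IH]; apply: le_trans IH.
exact/ltW/(lt_trans (hML n) (hLM n)).
Qed.

Definition q (a : R) k := (a + M k) / (a + L k.+1).
Definition Q a n := \prod_(k < n) q a k.
Definition r k := M k / L k.+1.

Lemma q_ge1 a k : 0 <= a -> 1 <= q a k.
Proof.
move=> a0; have := hML k; have := Lpos k.+1 => h1 h2.
rewrite /q ler_pdivlMr; last lra. lra.
Qed.

Lemma q_le_r a k : 0 <= a -> q a k <= r k.
Proof.
move=> a0; have := hML k; have := Lpos k.+1 => h1 h2.
rewrite /q /r ler_pdivrMr; last lra.
rewrite mulrAC ler_pdivlMr //. nra.
Qed.

Lemma Q_ge1 a n : 0 <= a -> 1 <= Q a n.
Proof.
move=> a0; rewrite /Q; elim: n => [|n IH]; first by rewrite big_ord0.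
rewrite big_ord_recr /=; have := q_ge1 a n a0; nra.
Qed.

Lemma Q_nd a : 0 <= a -> nondecreasing_seq (Q a).
Proof.
move=> a0; apply/nondecreasing_seqP => n.
rewrite /Q big_ord_recr /=; have := q_ge1 a n a0; have := Q_ge1 a n a0.
rewrite /Q; nra.
Qed.

Lemma tele a n : 0 < a ->
  \prod_(k < n) ((a + M k) / (a + L k)) * (a + L 0) = (a + L n) * Q a n.
Proof.
move=> a0; rewrite /Q; elim: n => [|n IH]; first by rewrite !big_ord0 mul1r mulr1.
rewrite !big_ord_recr /= mulrAC IH /q.
have h1 := Lpos n; have h2 := Lpos n.+1.
field; apply/andP; split; rewrite gt_eqF //; lra.
Qed.

Lemma p_le1 a n : 0 < a -> \prod_(k < n) ((a + M k) / (a + L k)) <= 1.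
Proof.
move=> a0; elim: n => [|n IH]; first by rewrite big_ord0.
rewrite big_ord_recr /=.
have h1 := Lpos n; have h2 := hLM n; have h3 := hM0 n.
have hf : (a + M n) / (a + L n) <= 1 by rewrite ler_pdivrMr; lra.
have hf0 : 0 <= (a + M n) / (a + L n) by apply: divr_ge0; lra.
have hp0 : 0 <= \prod_(k < n) ((a + M k) / (a + L k)).
  apply: prodr_ge0 => k _; apply: divr_ge0; have := Lpos k; have := hM0 k; lra.
nra.
Qed.

Lemma Q_bnd a n : 0 < a -> Q a n <= (a + L 0) / a.
Proof.
move=> a0; have h := tele a n a0; have h1 := p_le1 a n a0.
have hn := Lpos n; have h0 := Lpos 0; have hq := Q_ge1 a n (ltW a0).
rewrite ler_pdivlMr //. nra.
Qed.


Lemma Q_cvg a : 0 < a -> Q a @ \oo --> limn (Q a).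
Proof.
move=> a0; apply/cvgP; apply: nondecreasing_cvgn; first exact: Q_nd (ltW a0).
by exists ((a + L 0) / a) => _ [n _ <-]; exact: Q_bnd.
Qed.

Lemma infprod_eq a : 0 < a ->
  limn (fun n => \prod_(k < n) ((a + M k) / (a + L k)))
  = a / (a + L 0) * limn (Q a).
Proof.
move=> a0; have h0 := Lpos 0.
have -> : (fun n => \prod_(k < n) ((a + M k) / (a + L k))) =
          (fun n => (a + L n) / (a + L 0) * Q a n).
  apply/funext => n; apply: (@mulIf _ (a + L 0)); first by rewrite gt_eqF //; lra.
  rewrite tele //; field; rewrite gt_eqF //; lra.
apply: cvg_lim => //.
suff : (fun n => (a + L n) / (a + L 0) * Q a n) @ \oo --> (a + 0) / (a + L 0) * limn (Q a)
  by rewrite addr0.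
apply: cvgM; last exact: Q_cvg.
apply: cvgM; last exact: cvg_cst.
apply: cvgD; [exact: cvg_cst | exact: hL].
Qed.

Lemma Qr a n : 0 <= a -> Q a n <= \prod_(k < n) r k.
Proof.
move=> a0; rewrite /Q; apply: ler_prod => k _; apply/andP; split.
  by have := q_ge1 a k a0; lra.
exact: q_le_r.
Qed.

Lemma Qlim_le a C : 0 < a -> (forall n, \prod_(k < n) r k <= C) -> limn (Q a) <= C.
Proof.
move=> a0 hC; apply: limr_le; first by apply/cvgP; exact: Q_cvg.
by near=> n; apply: le_trans (Qr a n (ltW a0)) (hC n).
Unshelve. all: by end_near.
Qed.

Lemma Qlim_ge a m : 0 < a -> Q a m <= limn (Q a).
Proof.
move=> a0; apply: nondecreasing_cvgn_le; first exact: Q_nd (ltW a0).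
by apply/cvgP; exact: Q_cvg.
Qed.

Lemma r_ge1 k : 1 <= r k.
Proof. have := q_ge1 0 k (lexx 0); by rewrite /q !add0r. Qed.

Lemma rprod_ge m : 1 + series (fun k => r k - 1) m <= \prod_(k < m) r k.
Proof.
elim: m => [|m IH]; first by rewrite big_ord0 /series /= big_geq // addr0.
rewrite seriesSr big_ord_recr /=.
have h := r_ge1 m.
have hs : 0 <= series (fun k => r k - 1) m.
  rewrite /series /=; apply: sumr_ge0 => k _; have := r_ge1 k; lra.
nra.
Qed.

Lemma rprod_le m : \prod_(k < m) r k <= expR (series (fun k => r k - 1) m).
Proof.
rewrite /series /= big_mkord expR_sum; apply: ler_prod => k _.
apply/andP; split; first by have := r_ge1 k; lra.
by have := expR_ge1Dx (r k - 1); rewrite addrC subrK.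
Qed.

Lemma Qlim_seq m : (fun N => Q (L N) m) @ \oo --> \prod_(k < m) r k.
Proof.
elim: m => [|m IH].
  have -> : (fun N => Q (L N) 0) = (fun=> 1) by apply/funext => N; rewrite /Q big_ord0.
  by rewrite big_ord0; exact: cvg_cst.
have -> : (fun N => Q (L N) m.+1) = (fun N => Q (L N) m * q (L N) m).
  by apply/funext => N; rewrite /Q big_ord_recr.
rewrite big_ord_recr /=; apply: cvgM => //.
rewrite /q /r.
have hm := Lpos m.+1.
suff : (fun N => (L N + M m) / (L N + L m.+1)) @ \oo --> (0 + M m) / (0 + L m.+1)
  by rewrite !add0r.
apply: cvgM; first by apply: cvgD; [exact: hL | exact: cvg_cst].
apply: cvgV; first by rewrite add0r gt_eqF.
by apply: cvgD; [exact: hL | exact: cvg_cst].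
Qed.


Lemma s_nd : nondecreasing_seq (series (fun k => r k - 1)).
Proof.
apply/nondecreasing_seqP => n; rewrite seriesSr; have := r_ge1 n; lra.
Qed.

Lemma main_aux :
  ((fun N => (L N)^-1 * limn (fun n => \prod_(k < n) ((L N + M k) / (L N + L k))))
     @ \oo --> +oo)
  <-> (series (fun k => r k - 1) @ \oo --> +oo).
Proof.
have h0 := Lpos 0.
have -> : (fun N => (L N)^-1 * limn (fun n => \prod_(k < n) ((L N + M k) / (L N + L k))))
   = (fun N => limn (Q (L N)) / (L N + L 0)).
  apply/funext => N; have hN := Lpos N.
  rewrite infprod_eq //; field; apply/andP; split; rewrite gt_eqF //; lra.
split.
- move=> hF.
  have unb : forall B, exists n, B < series (fun k => r k - 1) n.
    move=> B; case: (pselect (exists n, B < series (fun k => r k - 1) n)) => // /forallNP hn.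
    exfalso.
    have hsB : forall n, series (fun k => r k - 1) n <= B.
      by move=> n; rewrite leNgt; apply/negP; exact: hn n.
    have hp : forall n, \prod_(k < n) r k <= expR B.
      move=> n; apply: le_trans (rprod_le n) _; by rewrite ler_expR.
    have hFb : forall N, limn (Q (L N)) / (L N + L 0) <= expR B / L 0.
      move=> N; have hN := Lpos N.
      have hl := Qlim_le (L N) (expR B) hN hp.
      have hl1 := Qlim_ge (L N) 0 hN.
      have hQ0 := Q_ge1 (L N) 0 (ltW hN).
      rewrite ler_pdivrMr; last lra.
      have e : expR B / L 0 * L 0 = expR B by rewrite divfK // gt_eqF.
      have hE : 0 <= expR B / L 0 by apply: divr_ge0; [exact: expR_ge0 | lra].
      nra.
    have := hF; move/cvgryPge/(_ (expR B / L 0 + 1)) => /filter_ex [N hN].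
    have := hFb N; lra.
  apply/cvgryPge => B; have [n hn] := unb B.
  exists n => // m /= hm; apply: le_trans (ltW hn) _; exact: s_nd.
- move=> hs; apply/cvgryPge => B.
  have := hs; move/cvgryPge/(_ (2 * L 0 * B + 1)) => /filter_ex [n hn].
  have hm := rprod_ge n.
  have := cvgr_gt _ (Qlim_seq n) (2 * L 0 * B) ltac:(lra).
  apply: filterS => N hN.
  have hLN := Lpos N; have hle := Lle0 N.
  have hl1 := Qlim_ge (L N) n hLN.
  have hQ0 := Q_ge1 (L N) n (ltW hLN).
  rewrite ler_pdivlMr; last lra.
  case: (leP B 0) => hB; nra.
Qed.

End Aux.

Theorem lemma4p8 (R : realType) (lam mu : nat -> R)
  (hmu0 : forall k, 0 < `|mu k|)
  (hlm : forall k, `|mu k| < `|lam k|)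
  (hml : forall k, `|lam k.+1| < `|mu k|)
  (hlim : lam @ \oo --> 0) :
  ((fun N => (lam N ^+ 2)^-1 *
      infprod (fun k => (lam N ^+ 2 + mu k ^+ 2) / (lam N ^+ 2 + lam k ^+ 2)))
     @ \oo --> +oo)
  <->
  ((series (fun k => mu k ^+ 2 / lam k.+1 ^+ 2 - 1)) @ \oo --> +oo).
Proof.
have h1 : forall k, 0 < mu k ^+ 2.
  by move=> k; rewrite -real_normK ?num_real // exprn_gt0.
have h2 : forall k, mu k ^+ 2 < lam k ^+ 2.
  move=> k; rewrite -(real_normK (num_real (mu k))) -(real_normK (num_real (lam k))).
  have := hlm k; have := hmu0 k; nra.
have h3 : forall k, lam k.+1 ^+ 2 < mu k ^+ 2.
  move=> k; rewrite -(real_normK (num_real (mu k))) -(real_normK (num_real (lam k.+1))).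
  have := hml k; have := normr_ge0 (lam k.+1); nra.
have h4 : (fun k => lam k ^+ 2) @ \oo --> 0.
  have -> : (fun k => lam k ^+ 2) = lam \* lam by apply/funext => k; rewrite /= expr2.
  have H := cvgM hlim hlim; rewrite mul0r in H.
  by apply: H; exact: _.
exact (@main_aux R _ _ h1 h2 h3 h4).
Qed.
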